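(* Let $\tau_i\in\tau_H$ be a HI-task in the multi-rate fluid model with earliest completion window $k_i$. If $$\sum_{j:1\le j<k_i}\theta_{i,j}^H w_j\ \ge\ u_i^H\sum_{j:1\le j<k_i}w_j,\qquad \forall j:1\le j<k_i,\ \theta_{i,j}^H\le\theta_{i,j+1}^H,$$ $$\forall j:k_i\le j\le n_H,\ \theta_{i,j}^H\ge u_i^H,\qquad\text{and}\qquad \theta_i^H\ge u_i^H,$$ then every early transition job of $\tau_i$ meets its deadline in the HI-mode (receives $C_i^H$ units of execution by its deadline).
   Context: A dual-criticality implicit-deadline sporadic task system runs on $m$ identical processors. Each task $\tau_i$ has period and relative deadline $T_i>0$, criticality in $\{LO,HI\}$, and WCETs $C_i^L\le C_i^H$; $u_i^L=C_i^L/T_i\le1$, $u_i^H=C_i^H/T_i\le1$; $n_H$ is the number of HI-tasks. The system starts in LO-mode; the mode switch is the first instant a HI-task job $\tau_i$ has executed $C_i^L$ units without completing; afterwards (HI-mode) LO-task jobs are dropped and HI jobs need up to $C_i^H$ units by their deadlines. Multi-rate fluid model (rate $\theta$ = receiving $\theta\ell$ units of execution in any interval of length $\ell$): in LO-mode each job of $\tau_i$ executes at rate $\theta_i^L\in(0,1]$; with time measured from the mode switch, the transition period $[0,\sum_{j=1}^{n_H}w_j)$ is divided into consecutive windows of durations $w_1,\dots,w_{n_H}\ge0$, window $j$ being $[\sum_{l<j}w_l,\sum_{l\le j}w_l)$, in which each job of HI-task $\tau_i$ executes at rate $\theta_{i,j}^H\in[0,1]$; after the transition period at rate $\theta_i^H\in(0,1]$.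 By convention $\theta_{i,n_H+1}^H$ denotes $\theta_i^H$. The earliest completion window of $\tau_i$ is the largest index $k_i\in\{1,\dots,n_H+1\}$ with $\sum_{j:1\le j<k_i}w_j<T_i-C_i^L/\theta_i^L$. An early transition job of $\tau_i$ is a job of $\tau_i$ released after the mode switch at a time $t<\sum_{j:1\le j<k_i}w_j$ (relative to the mode switch). *)

(* Defs.v *)
From mathcomp Require Import all_boot all_order all_algebra.
Set Implicit Arguments. Unset Strict Implicit. Unset Printing Implicit Defensive.
Import Order.TTheory GRing.Theory Num.Theory.
Local Open Scope ring_scope.

Section Fluid.
Variable R : realFieldType.

(* Start of window j (windows are 1-based): sum_{l : 1 <= l < j} w_l.
   Window j is [wstart w j, wstart w j.+1). *)
Definition wstart (w : nat -> R) (j : nat) : R := \sum_(1 <= l < j) w l.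

Definition overlap (a b c d : R) : R := Num.max 0 (Num.min b d - Num.max a c).

(* Execution received in HI-mode by a job of the task during the interval
   [a,b) (time measured from the mode switch, 0 <= a): rate thH j in window j
   (1 <= j <= nH), rate thF after the transition period. A rate theta means
   theta * l units in any interval of length l. *)
Definition hi_exec (nH : nat) (w thH : nat -> R) (thF : R) (a b : R) : R :=
  \sum_(1 <= j < nH.+1) thH j * overlap a b (wstart w j) (wstart w j.+1)
  + thF * Num.max 0 (b - Num.max a (wstart w nH.+1)).

Definition is_ecw (nH : nat) (w : nat -> R) (T CL thL : R) (k : nat) : Prop :=
  [/\ (1 <= k <= nH.+1)%N, wstart w k < T - CL / thL &
      forall k', (1 <= k' <= nH.+1)%N -> wstart w k' < T - CL / thL -> (k' <= k)%N].

End Fluid.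

(* Main.v *)
Require Import Defs.
From mathcomp Require Import all_boot all_order all_algebra.
From mathcomp Require Import lra zify ring.
From Stdlib Require Import Lia.
Import Order.TTheory GRing.Theory Num.Theory.
Local Open Scope ring_scope.

Ltac nomm x := match x with
  | context [Order.max _ _] => fail 1 | context [Order.min _ _] => fail 1 | _ => idtac end.
Ltac mm := repeat match goal with
  | |- context [Order.max ?x ?y] => nomm x; nomm y; case: (leP x y) => ?
  | |- context [Order.min ?x ?y] => nomm x; nomm y; case: (leP x y) => ? end; lra.

Ltac nl R := repeat match goal with H : ?T |- _ => lazymatch T with context[R] => clear H end end; lia.

Lemma L1 (R : realFieldType) (a b c d : R) : c <= d ->
  overlap a b c d + Num.max 0 (b - Num.max a d) = Num.max 0 (b - Num.max a c).
Proof. rewrite /overlap => ?. mm. Qed.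

Lemma L2 (R : realFieldType) (t c d : R) : c <= d ->
  Num.max 0 (Num.min t d - c) + Num.max 0 (d - Num.max t c) = d - c.
Proof. move=> ?. mm. Qed.

Lemma L3 (R : realFieldType) (t c d : R) : c <= d ->
  Num.min t c + Num.max 0 (Num.min t d - c) = Num.min t d.
Proof. move=> ?. mm. Qed.

Lemma L4 (R : realFieldType) (t c d : R) : d <= t -> Num.max 0 (d - Num.max t c) = 0.
Proof. move=> ?. mm. Qed.

Lemma L5 (R : realFieldType) (t c d : R) : t < c -> Num.max 0 (Num.min t d - c) = 0.
Proof. move=> ?. mm. Qed.

Lemma L6 (R : realFieldType) (a b c : R) : a < c -> c < b -> Num.max 0 (b - Num.max a c) = b - c.
Proof. move=> ? ?. mm. Qed.

Lemma L7 (R : realFieldType) (t : R) : 0 <= t -> Num.min t 0 = 0.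
Proof. move=> ?. mm. Qed.

Lemma L8 (R : realFieldType) (x : R) : 0 <= Num.max 0 x.
Proof. mm. Qed.

Lemma L9 (R : realFieldType) (t b d c : R) : d <= b ->
  overlap t b c d = Num.max 0 (d - Num.max t c).
Proof. rewrite /overlap => ?. mm. Qed.

Theorem theorem2 (R : realFieldType) (nH : nat) (T CL CH thL thF : R)
    (w thH : nat -> R) (k : nat) (t : R) :
  (1 <= nH)%N ->
  0 < T -> 0 <= CL -> CL <= CH -> CL / T <= 1 -> CH / T <= 1 ->
  0 < thL <= 1 -> 0 < thF <= 1 ->
  (forall j, (1 <= j <= nH)%N -> 0 <= w j) ->
  (forall j, (1 <= j <= nH)%N -> 0 <= thH j <= 1) ->
  is_ecw nH w T CL thL k ->
  (* hypotheses of the theorem *)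
  \sum_(1 <= j < k) thH j * w j >= (CH / T) * \sum_(1 <= j < k) w j ->
  (forall j, (1 <= j < k)%N ->
     thH j <= (if (j.+1 <= nH)%N then thH j.+1 else thF)) ->
  (forall j, (k <= j <= nH)%N -> thH j >= CH / T) ->
  thF >= CH / T ->
  (* an early transition job released at t *)
  0 <= t -> t < wstart w k ->
  hi_exec nH w thH thF t (t + T) >= CH.
Proof.
move=> hnH hT hCL hCLH _ _ /andP[hthL _] /andP[hthF _] hw hth [/andP[hk1 hk2] hsk _]
  hsum hmono htail hF ht htk.
set u := CH / T.
set s := wstart w.
have hCH : CH = u * T by rewrite /u divfK // gt_eqF.
have hs1 : s 1%N = 0 by rewrite /s /wstart big_geq.
have hsS : forall j, (1 <= j)%N -> s j.+1 = s j + w j.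
  by move=> j hj; rewrite /s /wstart big_nat_recr.
have hs : forall i j, (1 <= i)%N -> (i <= j)%N -> (j <= nH.+1)%N -> s i <= s j.
  move=> i j hi hij hj; rewrite /s /wstart (big_cat_nat hi hij) /= lerDl.
  rewrite big_nat; apply: sumr_ge0 => l /andP[hl1 hl2]; apply: hw.
  apply/andP; split; [exact: leq_trans hi hl1 | exact: leq_trans hl2 hj].
have hCLthL : 0 <= CL / thL by apply: divr_ge0 => //; exact: ltW.
have hskT : s k < t + T by rewrite /s; lra.
have hk2' : (2 <= k)%N.
  case: k hk1 hk2 hsk htk hmono htail hsum hskT => // [[|k]] //.
  by move=> _ _ _; rewrite -/s hs1; lra.
rewrite /hi_exec (big_cat_nat (n:=k)) //= -/s.
have htl : forall n, (n <= nH.+1 - k)%N ->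
  u * Num.max 0 (t + T - Num.max t (s (nH.+1 - n)%N)) <=
  \sum_((nH.+1 - n)%N <= j < nH.+1) thH j * overlap t (t + T) (s j) (s j.+1)
  + thF * Num.max 0 (t + T - Num.max t (s nH.+1)).
  elim=> [|n IH] hn.
    rewrite subn0 big_geq // add0r.
    by apply: ler_wpM2r; [exact: L8 | exact: hF].
  have hnn : (n <= nH)%N by move: hn hk1; nl R.
  have -> : (nH.+1 - n.+1 = nH - n)%N by nl R.
  rewrite big_ltn; last nl R.
  have IH' := IH (ltnW hn). move: IH'.
  have -> : (nH.+1 - n = (nH - n)%N.+1)%N by nl R.
  move=> IH'.
  have hc : s (nH - n)%N <= s (nH - n)%N.+1 by apply: hs; nl R.
  rewrite -(@L1 R t (t + T) _ _ hc).
  have hu : u <= thH (nH - n)%N by apply: htail; move: hn hk1 hnH; nl R.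
  have : 0 <= overlap t (t + T) (s (nH - n)%N) (s (nH - n)%N.+1) by apply: L8.
  set O := overlap _ _ _ _. set Y := Num.max _ _ in IH' *.
  have hu0 : 0 <= u by rewrite /u; apply: divr_ge0 => //; [lra | exact: ltW].
  move=> hO; have h1 : u * O <= thH (nH - n)%N * O by apply: ler_wpM2r.
  rewrite mulrDr; move: IH' h1; clear; lra.
have := htl (nH.+1 - k)%N (leqnn _).
rewrite subKn // L6 //.
move=> hT1.
rewrite (eq_big_nat _ _ (F2 := fun j => thH j * Num.max 0 (s j.+1 - Num.max t (s j)))); last first.
  move=> j /andP[hj1 hj2]; rewrite L9 //.
  have : s j.+1 <= s k by apply: hs.
  lra.
set pre := fun j => Num.max 0 (Num.min t (s j.+1) - s j).
set ovh := fun j => Num.max 0 (s j.+1 - Num.max t (s j)).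
have hpre : forall m, (1 <= m)%N -> (m <= k)%N -> \sum_(1 <= j < m) pre j = Num.min t (s m).
  elim=> // m IH hm hmk.
  case: m IH hm hmk => [|m] IH hm hmk.
    by rewrite big_geq // hs1 L7.
  rewrite big_nat_recr // (IH isT (ltnW hmk)) /pre /= L3 //; apply: hs => //; nl R.
have hpw : forall j, (1 <= j < k)%N -> pre j + ovh j = w j.
  move=> j /andP[hj1 hj2]; rewrite /pre /ovh L2; last by apply: hs; nl R.
  rewrite hsS //; lra.
have hsumpre : \sum_(1 <= j < k) pre j = t.
  rewrite hpre //; apply: min_l; exact: ltW.
have hsumov : \sum_(1 <= j < k) ovh j = s k - t.
  have : \sum_(1 <= j < k) (pre j + ovh j) = s k.
    by rewrite /s /wstart; apply: eq_big_nat.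
  rewrite big_split /= hsumpre; lra.
have hrw : \sum_(1 <= j < k) thH j * w j = \sum_(1 <= j < k) thH j * pre j + \sum_(1 <= j < k) thH j * ovh j.
  rewrite -big_split /=; apply: eq_big_nat => j hj; rewrite -hpw //; ring.
have hr : forall i j, (1 <= i)%N -> (i <= j)%N -> (j < k)%N -> thH i <= thH j.
  move=> i; elim=> [|j IH] hi hij hjk; first by move: hi hij; nl R.
  case: (ltngtP i j.+1) hij => // hij _; last by rewrite hij.
  apply: le_trans (IH hi _ _) _; [nl R | nl R |].
  have := hmono j; rewrite ifT; last nl R.
  apply; nl R.
pose P := fun j => [&& (1 <= j)%N, (j < k)%N & s j <= t].
have exP : exists i, P i by exists 1%N; rewrite /P hs1 ht andbT; apply/andP; split => //.
have ubP : forall i, P i -> (i <= k)%N by move=> i /and3P[_ /ltnW -> _].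
case: (ex_maxnP exP ubP) => p /and3P[hp1 hpk hpt] hpmax.
set rho := thH p.
have c1 : forall j, (1 <= j < k)%N -> 0 <= (thH j - rho) * ovh j.
  move=> j /andP[hj1 hjk].
  case: (ltngtP j p) => hjp.
  - rewrite /ovh L4 ?mulr0 //; apply: le_trans hpt; apply: hs => //; nl R.
  - apply: mulr_ge0; last exact: L8.
    rewrite subr_ge0; apply: hr => //; nl R.
  - by rewrite hjp subrr mul0r.
have c2 : forall j, (1 <= j < k)%N -> (thH j - rho) * pre j <= 0.
  move=> j /andP[hj1 hjk].
  case: (leqP j p) => hjp.
  - apply: mulr_le0_ge0; last exact: L8.
    rewrite subr_le0; apply: hr => //.
  - have hsj : t < s j.
      rewrite ltNge; apply/negP => hc.
      have := hpmax j; rewrite /P hj1 hjk hc => /(_ isT); nl R.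
    by rewrite /pre L5 ?mulr0.
have hA : rho * (s k - t) <= \sum_(1 <= j < k) thH j * ovh j.
  rewrite -hsumov mulr_sumr -subr_ge0 -sumrB big_nat; apply: sumr_ge0 => j hj.
  have := c1 j hj; lra.
have hB : \sum_(1 <= j < k) thH j * pre j <= rho * t.
  rewrite -hsumpre mulr_sumr -subr_le0 -sumrB big_nat; apply: sumr_le0 => j hj.
  have := c2 j hj; lra.
have hsum' : u * s k <= \sum_(1 <= j < k) thH j * w j by exact: hsum.
case: (lerP u rho) => hur.
- have : u * (s k - t) <= rho * (s k - t) by apply: ler_wpM2r => //; rewrite subr_ge0; exact: ltW.
  lra.
- have : rho * t <= u * t by apply: ler_wpM2r => //; exact: ltW.
  lra.
Qed.
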